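(* Let $A$ be an abelian topological group and $D\le A$ a dense subgroup, and let $r\colon\hat A\to\hat D$ be the restriction map $\chi\mapsto\chi|_D$. Then: (a) $r$ is a bijective continuous homomorphism (every continuous character of $D$ extends uniquely to a continuous character of $A$); (b) if $\alpha_D$ is continuous, then a subset of $\hat A$ is compact if and only if its image under $r$ is compact in $\hat D$, and moreover $\alpha_A$ is continuous; (c) if $D$ is locally quasi-convex, then so is $A$.
   Context: $\mathbb{T}=\mathbb{R}/\mathbb{Z}$, $\Lambda_1$ is the image of $[-\tfrac14,\tfrac14]$ in $\mathbb{T}$. For an abelian topological group $A$, $\hat A$ is the group of continuous homomorphisms $A\to\mathbb{T}$ with the compact-open topology and $\alpha_A\colon A\to\hat{\hat A}$, $\alpha_A(a)(\chi)=\chi(a)$. For $S\subseteq A$, $S^\vartriangleright=\{\chi\in\hat A\mid\chi(S)\subseteq\Lambda_1\}$; for $\Phi\subseteq\hat A$, $\Phi^\vartriangleleft=\{a\in A\mid\chi(a)\in\Lambda_1\ \forall\chi\in\Phi\}$. $A$ is locally quasi-convex if $\{U^{\vartriangleright\vartriangleleft}\mid U \text{ a neighborhood of } 0\}$ is a base of neighborhoods of $0$ in $A$. *)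

(* Defs.v *)
From HB Require Import structures.
From mathcomp Require Import all_boot all_order all_algebra generic_quotient.
From mathcomp Require Import all_classical all_reals all_analysis.
From mathcomp Require Import quotient_topology.

Set Implicit Arguments.
Unset Strict Implicit.
Unset Printing Implicit Defensive.

Import Order.TTheory GRing.Theory Num.Theory numFieldNormedType.Exports.
Local Open Scope classical_set_scope.
Local Open Scope ring_scope.
Local Open Scope quotient_scope.

Section Torus.
Variable R : realType.

Definition zdiff : rel R := fun x y => (x - y) \is a Num.int.

Lemma zdiff_refl : reflexive zdiff.
Proof. by move=> x; rewrite /zdiff subrr rpred0. Qed.

Lemma zdiff_sym : symmetric zdiff.
Proof. by move=> x y; rewrite /zdiff -opprB rpredN. Qed.

Lemma zdiff_trans : transitive zdiff.
Proof.
move=> y x z hxy hyz; rewrite /zdiff.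
have -> : x - z = (x - y) + (y - z) by rewrite addrA subrK.
exact: rpredD.
Qed.

Canonical zdiff_equiv := EquivRel zdiff zdiff_refl zdiff_sym zdiff_trans.

Definition torus_quot := {eq_quot zdiff_equiv}.

Definition torus : Type := quotient_topology torus_quot.
HB.instance Definition _ := Topological.copy torus (quotient_topology torus_quot).

Definition tpi (x : R) : torus := \pi_(torus_quot) x.

Definition tadd (p q : torus) : torus := tpi (@repr _ torus_quot p + @repr _ torus_quot q).

Definition Lambda1 : set torus := tpi @` `[- (4%:R)^-1, (4%:R)^-1].

End Torus.
Arguments Lambda1 R : clear implicits.

Section Duals.
Variable R : realType.
Local Notation T := (torus R).

Definition cofun (A : topologicalZmodType) := {compact-open, A -> T}.

Definition is_char (A : topologicalZmodType) (f : A -> T) : Prop :=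
  continuous f /\ forall a b : A, f (a + b) = tadd (f a) (f b).

Definition chars (A : topologicalZmodType) : set (cofun A) :=
  [set f | is_char f].
Arguments chars A : clear implicits.

(** the dual group as a topological space (subspace topology) *)
Definition dual (A : topologicalZmodType) : Type := set_type (chars A).

Definition chadd (A : topologicalZmodType) (f g : cofun A) : cofun A :=
  fun a => tadd (f a) (g a).

(** alpha_A : A -> \hat{\hat A}, alpha_A(a)(chi) = chi(a), viewed in the
    compact-open space of maps \hat A -> T *)
Definition alpha (A : topologicalZmodType) (a : A) :
  {compact-open, dual A -> T} := fun chi => (set_val chi) a.

Definition polar (A : topologicalZmodType) (S : set A) : set (cofun A) :=
  [set chi | chars A chi /\ chi @` S `<=` Lambda1 R].

Definition prepolar (A : topologicalZmodType) (Phi : set (cofun A)) : set A :=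
  [set a | forall chi, Phi chi -> Lambda1 R (chi a)].

(** local quasi-convexity: {U^><| U nbhd of 0} is a base of nbhds of 0 *)
Definition locally_quasi_convex (A : topologicalZmodType) : Prop :=
  (forall U : set A, nbhs (0 : A) U -> nbhs (0 : A) (prepolar (polar U))) /\
  (forall V : set A, nbhs (0 : A) V ->
     exists2 U : set A, nbhs (0 : A) U & prepolar (polar U) `<=` V).

Definition restr (D A : topologicalZmodType) (i : D -> A) (f : cofun A) :
  cofun D := fun d => f (i d).

End Duals.
Arguments chars R A : clear implicits.
Arguments locally_quasi_convex R A : clear implicits.
Arguments cofun R A : clear implicits.
Arguments dual R A : clear implicits.

(** D is (isomorphic, as a topological group, to) a dense subgroup of A,
    via the inclusion i *)
Definition dense_subgroup_embedding (D A : topologicalZmodType) (i : D -> A)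
  : Prop :=
  [/\ injective i,
      (forall x y : D, i (x + y) = i x + i y),
      continuous i,
      (forall U : set D, open U -> exists2 V : set A, open V & i @^-1` V = U)
    & dense (range i)].

(* Main.v *)
Require Import Defs.
From HB Require Import structures.
From mathcomp Require Import all_boot all_order all_algebra generic_quotient.
From mathcomp Require Import all_classical all_reals all_analysis.
From mathcomp Require Import quotient_topology.
From mathcomp Require Import ring lra.

Set Implicit Arguments.
Unset Strict Implicit.
Unset Printing Implicit Defensive.
Import Order.TTheory GRing.Theory Num.Theory numFieldNormedType.Exports.
Local Open Scope classical_set_scope.
Local Open Scope ring_scope.
Local Open Scope quotient_scope.

Section TorusFacts.
Variable R : realType.
Local Notation T := (torus R).

Definition dZ (x : R) : R :=
  if x - (Num.floor x)%:~R <= (Num.floor x)%:~R + 1 - x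
  then x - (Num.floor x)%:~R else (Num.floor x)%:~R + 1 - x.

Lemma dZ_le (x k : R) : k \is a Num.int -> dZ x <= `|x - k|.
Proof.
move=> /intrP [m ->]; rewrite /dZ.
have [hm|hm] := leP m (Num.floor x).
  have : m%:~R <= (Num.floor x)%:~R :> R by rewrite ler_int.
  have := floor_le x => h1 h2.
  rewrite ger0_norm ?subr_ge0; last by apply: le_trans h2 h1.
  have h3 : x - (Num.floor x)%:~R <= x - m%:~R by rewrite lerB.
  by case: ifP => // h; apply: le_trans h3; apply: ltW; rewrite ltNge h.
have : (Num.floor x + 1)%:~R <= m%:~R :> R by rewrite ler_int lezD1.
have := floorD1_gt x => h1 h2.
have hx : x - m%:~R < 0 by rewrite subr_lt0; apply: lt_le_trans h1 h2.
rewrite (ltr0_norm hx) opprB; rewrite intrD in h2.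
have h3 : (Num.floor x)%:~R + 1 - x <= m%:~R - x by rewrite lerB.
by case: ifP => // h; apply: le_trans h3.
Qed.

Lemma dZ_ex (x : R) : exists2 k : R, k \is a Num.int & dZ x = `|x - k|.
Proof.
rewrite /dZ; have h1 := floor_le x; have h2 := floorD1_gt x.
case: ifP => h.
  exists (Num.floor x)%:~R; first exact: intr_int.
  by rewrite ger0_norm // subr_ge0.
exists (Num.floor x + 1)%:~R; first exact: intr_int.
by rewrite ltr0_norm ?subr_lt0 // opprB intrD.
Qed.

Lemma dZ_ge0 x : 0 <= dZ x.
Proof. by have [k _ ->] := dZ_ex x. Qed.

Lemma dZ_intD x k : k \is a Num.int -> dZ (x + k) = dZ x.
Proof.
move=> hk; apply/eqP; rewrite eq_le; apply/andP; split.
  have [l hl ->] := dZ_ex x.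
  have -> : x - l = x + k - (k + l) by rewrite opprD addrA addrK.
  by apply: dZ_le; rewrite rpredD.
have [l hl ->] := dZ_ex (x + k).
have -> : x + k - l = x - (l - k) by rewrite opprB addrA.
by apply: dZ_le; rewrite rpredB.
Qed.

Lemma dZ_N x : dZ (- x) = dZ x.
Proof.
apply/eqP; rewrite eq_le; apply/andP; split.
  have [l hl ->] := dZ_ex x.
  have -> : x - l = - (- x - (- l)) by ring.
  by rewrite normrN; apply: dZ_le; rewrite rpredN.
have [l hl ->] := dZ_ex (- x).
have -> : - x - l = - (x - (- l)) by ring.
by rewrite normrN; apply: dZ_le; rewrite rpredN.
Qed.

Lemma dZ_D x y : dZ (x + y) <= dZ x + dZ y.
Proof.
have [k hk ->] := dZ_ex x; have [l hl ->] := dZ_ex y.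
apply: le_trans (ler_normD _ _).
have -> : x - k + (y - l) = x + y - (k + l) by rewrite addrACA opprD.
by apply: dZ_le; rewrite rpredD.
Qed.

Lemma dZ_small x : `|x| <= 2^-1 -> dZ x = `|x|.
Proof.
move=> hx; apply/eqP; rewrite eq_le; apply/andP; split.
  by have := dZ_le x (int_num0 R); rewrite subr0.
have [k /intrP [m ->] ->] := dZ_ex x.
have [->|hm] := eqVneq m 0; first by rewrite subr0.
have h1 : 1 <= `|m%:~R : R|.
  by rewrite -intr_norm ler1z -gtz0_ge1 normr_gt0.
have : `|m%:~R : R| - `|x| <= `|x - m%:~R|.
  by rewrite distrC; apply: lerB_dist.
move=> h2; apply: le_trans h2.
lra.
Qed.

Lemma dZ_le_norm x : dZ x <= `|x|.
Proof. by have := dZ_le x (int_num0 R); rewrite subr0. Qed.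

Lemma dZ0 x : x \is a Num.int -> dZ x = 0.
Proof.
move=> hx; apply/eqP; rewrite eq_le dZ_ge0 andbT.
by have := dZ_le x hx; rewrite subrr normr0.
Qed.

Lemma dZ_eq0 x : dZ x = 0 -> x \is a Num.int.
Proof.
have [k hk ->] := dZ_ex x => /eqP; rewrite normr_eq0 subr_eq0 => /eqP ->.
exact: hk.
Qed.

Lemma dZ_lip x y : dZ x <= dZ y + `|x - y|.
Proof.
have := dZ_D y (x - y); rewrite addrC subrK => h; apply: le_trans h _.
by rewrite lerD2l dZ_le_norm.
Qed.


Lemma tpi_eq (x y : R) : tpi x = tpi y <-> (x - y) \is a Num.int.
Proof.
exact: (rwP (@eqquotP _ _ (torus_quot R) x y)).
Qed.

Lemma tpi_repr (p : T) : tpi (@repr _ (torus_quot R) p) = p.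
Proof. exact: reprK. Qed.

Definition rep (p : T) : R := @repr _ (torus_quot R) p.

Lemma rep_tpi (x : R) : (rep (tpi x) - x) \is a Num.int.
Proof. by apply/tpi_eq; rewrite /rep tpi_repr. Qed.

Lemma tpi_rep (p : T) : tpi (rep p) = p.
Proof. exact: tpi_repr. Qed.

Lemma tadd_pi (x y : R) : tadd (tpi x) (tpi y) = tpi (x + y).
Proof.
rewrite /tadd; apply/tpi_eq.
have -> : @repr _ (torus_quot R) (tpi x) + @repr _ (torus_quot R) (tpi y) - (x + y)
  = (rep (tpi x) - x) + (rep (tpi y) - y) by rewrite /rep; ring.
by rewrite rpredD // rep_tpi.
Qed.

Lemma tadd_rep p q : tadd p q = tpi (rep p + rep q).
Proof. by []. Qed.

Definition tnorm (p : T) : R := dZ (rep p).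
Definition tdist (p q : T) : R := dZ (rep p - rep q).

Lemma tnorm_pi (x : R) : tnorm (tpi x) = dZ x.
Proof.
rewrite /tnorm -[rep (tpi x)](subrK x) addrC dZ_intD //; exact: rep_tpi.
Qed.

Lemma tdist_pi (x y : R) : tdist (tpi x) (tpi y) = dZ (x - y).
Proof.
rewrite /tdist.
have -> : rep (tpi x) - rep (tpi y) = (x - y) + ((rep (tpi x) - x) - (rep (tpi y) - y)) by ring.
by rewrite dZ_intD // rpredB // rep_tpi.
Qed.

Lemma tdist_ge0 (p q : T) : 0 <= tdist p q.
Proof. exact: dZ_ge0. Qed.

Lemma tdistC (p q : T) : tdist p q = tdist q p.
Proof. by rewrite /tdist -dZ_N opprB. Qed.

Lemma tdistxx (p : T) : tdist p p = 0.
Proof. by rewrite /tdist subrr; apply: dZ0; exact: int_num0. Qed.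

Lemma tdist_triangle (p q r : T) : tdist p r <= tdist p q + tdist q r.
Proof.
rewrite /tdist; have -> : rep p - rep r = (rep p - rep q) + (rep q - rep r) by ring.
exact: dZ_D.
Qed.

Lemma tdist_eq0 (p q : T) : tdist p q = 0 -> p = q.
Proof. by move=> /dZ_eq0 h; rewrite -(tpi_rep p) -(tpi_rep q); apply/tpi_eq. Qed.

Lemma tdist_add (p q p' q' : T) :
  tdist (tadd p q) (tadd p' q') <= tdist p p' + tdist q q'.
Proof.
rewrite !tadd_rep tdist_pi /tdist.
have -> : rep p + rep q - (rep p' + rep q') = (rep p - rep p') + (rep q - rep q') by ring.
exact: dZ_D.
Qed.

Lemma tnorm_add (p q : T) : tnorm (tadd p q) <= tnorm p + tnorm q.
Proof. by rewrite tadd_rep tnorm_pi; apply: dZ_D. Qed.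

Lemma tnorm_dist (p q : T) : tnorm p <= tnorm q + tdist p q.
Proof.
rewrite /tnorm /tdist; have e : rep q + (rep p - rep q) = rep p by ring.
by have := dZ_D (rep q) (rep p - rep q); rewrite e.
Qed.

Lemma tdist_tnorm (p q : T) : tdist (tadd p q) q = tnorm p.
Proof.
rewrite tadd_rep -{2}(tpi_rep q) tdist_pi /tnorm.
by have -> : rep p + rep q - rep q = rep p by ring.
Qed.

Lemma Lambda1P (p : T) : Lambda1 R p <-> tnorm p <= 4^-1.
Proof.
split.
  case=> x /=; rewrite in_itv /= => /andP [h1 h2] <-; rewrite tnorm_pi.
  apply: le_trans (dZ_le_norm x) _; rewrite ler_norml h1 h2 //.
move=> h; have [k hk hd] := dZ_ex (rep p).
exists (rep p - k); last first.
  rewrite -{2}(tpi_rep p); apply/tpi_eq.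
  have -> : rep p - k - rep p = - k by ring.
  by rewrite rpredN.
rewrite /= in_itv /=; rewrite /tnorm hd in h.
by rewrite -ler_norml.
Qed.

Lemma tnorm_half (p : T) : tnorm p <= 4^-1 -> tnorm (tadd p p) <= 4^-1 ->
  tnorm p <= 8^-1.
Proof.
move=> h1; have [k hk hd] := dZ_ex (rep p).
rewrite tadd_rep tnorm_pi.
have -> : rep p + rep p = (2 * (rep p - k)) + 2 * k by ring.
rewrite dZ_intD; last by rewrite rpredM // ?rpred_nat.
rewrite /tnorm hd in h1 *; rewrite dZ_small; last first.
  by rewrite normrM ger0_norm //; lra.
by rewrite normrM ger0_norm //; lra.
Qed.


Definition tball (p : T) (e : R) : set T := [set q | tdist p q < e].

Lemma tdist_pr (p : T) (y : R) : tdist p (tpi y) = dZ (rep p - y).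
Proof. by rewrite -{1}(tpi_rep p) tdist_pi. Qed.

Lemma open_tball p e : open (tball p e).
Proof.
rewrite /open /= /quotient_open; rewrite openE => x /= h.
have {h} h : tdist p (tpi x) < e := h.
rewrite /interior nbhs_ballP; exists (e - tdist p (tpi x)); first by rewrite /= subr_gt0.
move=> y; rewrite -ball_normE /= => hy.
suff : tdist p (tpi y) < e by [].
have := dZ_lip (rep p - y) (rep p - x).
have -> : rep p - y - (rep p - x) = x - y by ring.
rewrite !tdist_pr in h hy *; lra.
Qed.

Lemma tball_nbhs (p : T) e : 0 < e -> nbhs p (tball p e).
Proof.
move=> he; apply: open_nbhs_nbhs; split; first exact: open_tball.
by rewrite /tball /= tdistxx.
Qed.

Lemma tpi_continuous : continuous (@tpi R).
Proof. exact: (@pi_continuous _ (torus_quot R)). Qed.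

Lemma nbhs_tball (p : T) (N : set T) : nbhs p N -> exists2 e, 0 < e & tball p e `<=` N.
Proof.
rewrite nbhsE => -[B [oB Bp] BN].
have : nbhs (rep p) (@tpi R @^-1` B).
  apply: tpi_continuous; rewrite tpi_rep; apply: open_nbhs_nbhs; split => //.
rewrite nbhs_ballP => -[r /= r0 hr]; exists r => // q hq.
have [k hk hd] := dZ_ex (rep p - rep q).
have {hq} hq : dZ (rep p - rep q) < r := hq.
rewrite hd in hq.
have : B (tpi (rep q + k)).
  apply: (hr (rep q + k)); rewrite -ball_normE /=.
  by have -> : rep p - (rep q + k) = rep p - rep q - k by ring.
have -> : tpi (rep q + k) = q.
  rewrite -[RHS](tpi_rep q); apply/tpi_eq.
  by have -> : rep q + k - rep q = k by ring.
by move/BN.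
Qed.

Lemma torus_compact : compact [set: T].
Proof.
have -> : [set: T] = @tpi R @` `[0, 1].
  apply/seteqP; split => // q _.
  exists (rep q - (Num.floor (rep q))%:~R).
    rewrite /= in_itv /=; apply/andP; split.
      by rewrite subr_ge0 floor_le.
    have := floorD1_gt (rep q); rewrite intrD; move=> h; apply: ltW; lra.
  rewrite -[RHS](tpi_rep q); apply/tpi_eq.
  have -> : rep q - (Num.floor (rep q))%:~R - rep q = - (Num.floor (rep q))%:~R by ring.
  by rewrite rpredN intr_int.
apply: continuous_compact; last exact: segment_compact.
apply: continuous_subspaceT; exact: tpi_continuous.
Qed.

End TorusFacts.
Section GroupFacts.
Variable M : topologicalZmodType.

Lemma shift_continuous (a : M) : continuous (fun x : M => a + x).
Proof.
move=> x.
apply: (@continuous_comp _ _ _ (fun x => (a, x)) (fun x : M * M => x.1 + x.2)).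
  by apply: cvg_pair => /=; [exact: cvg_cst|exact: cvg_id].
exact: add_continuous.
Qed.

Lemma nbhs_shift0 (a : M) (N : set M) :
  nbhs a N -> nbhs (0 : M) [set x | N (a + x)].
Proof.
move=> h; move: (@shift_continuous a 0); rewrite /continuous_at addr0.
by move=> /(_ _ h).
Qed.

Lemma nbhs0_shift (a : M) (W : set M) :
  nbhs (0 : M) W -> nbhs a [set x | W (x - a)].
Proof.
move=> h; move: (@shift_continuous (- a) a); rewrite /continuous_at addNr.
move=> /(_ _ h) h2; rewrite nbhs_simpl /= in h2.
by apply: filterS h2 => x /=; rewrite addrC.
Qed.

Lemma nbhs0_add (V : set M) : nbhs (0 : M) V ->
  exists2 N, nbhs (0 : M) N & forall x y, N x -> N y -> V (x + y).
Proof.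
move=> h; move: (@add_continuous M (0, 0)); rewrite /continuous_at /= addr0.
move=> /(_ _ h).
case=> -[A B] /= [nA nB] sAB; exists (A `&` B); first exact: filterI.
by move=> x y [Ax _] [_ By]; apply: (sAB (x, y)).
Qed.

Lemma nbhs0_sub (V : set M) : nbhs (0 : M) V ->
  exists2 N, nbhs (0 : M) N & forall x y, N x -> N y -> V (x - y).
Proof.
move=> h; move: (@sub_continuous M (0, 0)); rewrite /continuous_at /= subr0.
move=> /(_ _ h).
case=> -[A B] /= [nA nB] sAB; exists (A `&` B); first exact: filterI.
by move=> x y [Ax _] [_ By]; apply: (sAB (x, y)).
Qed.

Lemma nbhs0_opp (V : set M) : nbhs (0 : M) V -> nbhs (0 : M) [set x | V (- x)].
Proof.
move=> h; move: (@opp_continuous M 0); rewrite /continuous_at /= oppr0.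
by move=> /(_ _ h).
Qed.

End GroupFacts.


Section CharFacts.
Variable R : realType.
Local Notation T := (torus R).

Lemma char_dist (M : topologicalZmodType) (f : M -> T) :
  (forall a b : M, f (a + b) = tadd (f a) (f b)) ->
  forall x y, tdist (f x) (f y) = tnorm (f (x - y)).
Proof.
by move=> hf x y; rewrite -{1}(subrK y x) (hf (x - y) y) tdist_tnorm.
Qed.

Lemma small_eq (p q : T) : (forall e : R, 0 < e -> tdist p q < e) -> p = q.
Proof.
move=> h; apply: tdist_eq0; apply/eqP; rewrite eq_le tdist_ge0 andbT.
apply/ler_addgt0Pr => e he; rewrite add0r; exact/ltW/h.
Qed.

Lemma small_le (x c : R) : (forall e : R, 0 < e -> x < c + e) -> x <= c.
Proof. by move=> h; apply/ler_addgt0Pr => e he; exact/ltW/h. Qed.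

End CharFacts.

Section Equi.
Variable R : realType.
Local Notation T := (torus R).

Definition equi (M : topologicalZmodType) (E : set (cofun R M)) :=
  forall e : R, 0 < e -> exists2 W, nbhs (0 : M) W &
    forall f, E f -> forall w, W w -> tnorm (f w) < e.

Lemma tnorm0 (p : T) : tdist (tpi 0) p = tnorm p.
Proof. by rewrite tdistC tdist_pr subr0. Qed.

Lemma char0 (M : topologicalZmodType) (f : cofun R M) : chars R M f -> f 0 = tpi 0.
Proof.
case=> _ fh; apply: small_eq => e he; rewrite tdistC tnorm0.
have := char_dist fh 0 0; rewrite tdistxx subr0 => <-; exact: he.
Qed.

Lemma ULT (X Y : Type) (F : set_system X) (h : X -> Y) (G : set_system Y) :
  UltraFilter F -> (forall N, ~ ((h @ F) (~` N) /\ G N)) ->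
  forall N, G N -> F (h @^-1` N).
Proof.
move=> UF hc N GN; case: (in_ultra_setVsetC (h @^-1` N) UF) => // hF.
by exfalso; apply: (hc N); split.
Qed.

Lemma ULT_cluster (X : Type) (Y : topologicalType) (F : set_system X) (h : X -> Y) y :
  UltraFilter F -> cluster (h @ F) y -> forall N, nbhs y N -> F (h @^-1` N).
Proof.
move=> UF cl; apply: ULT => N [h1 h2].
by have [z [nz zN]] := cl _ _ h1 h2.
Qed.

Lemma compact_dual (M : topologicalZmodType) (K : set (cofun R M)) :
  K `<=` chars R M -> compact K -> compact (@set_val _ (chars R M) @^-1` K : set (dual R M)).
Proof.
move=> KC cK; rewrite compact_ultra => F UF FK.
have PF : ProperFilter (@set_val _ (chars R M) @ F) by exact: fmap_proper_filter.
have [g [Kg clg]] := cK _ PF FK.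
pose chi : dual R M := @exist _ _ g (mem_set (KC g Kg)).
exists chi; split => //=.
move=> U /= [_ [[B oB <-] Bchi BU]].
apply: (filterS BU); apply: (ULT_cluster UF clg).
by apply: open_nbhs_nbhs; split.
Qed.

Lemma EQD (M : topologicalZmodType) (K : set (cofun R M)) :
  continuous (@alpha R M) -> K `<=` chars R M -> compact K -> equi K.
Proof.
move=> ca KC cK e he.
have cKK := compact_dual KC cK.
have hop := @compact_open_open (dual R M) T _ _ cKK (@open_tball R (tpi 0) e).
have hn : nbhs (alpha (0 : M)) [set phi : {compact-open, dual R M -> T} |
    phi @` (@set_val _ (chars R M) @^-1` K) `<=` tball (tpi 0) e].
  apply: open_nbhs_nbhs; split => //.
  move=> _ [chi _ <-]; rewrite /alpha /tball /= tnorm0.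
  have h0 : set_val chi 0 = tpi 0 := char0 (set_valP chi).
  rewrite h0.
  by rewrite tnorm_pi dZ0 // int_num0.
have := ca 0 _ hn; rewrite nbhs_simpl /= => hW.
exists (@alpha R M @^-1` [set phi : {compact-open, dual R M -> T} |
    phi @` (@set_val _ (chars R M) @^-1` K) `<=` tball (tpi 0) e]) => //.
move=> f Kf w /= hw.
pose chi : dual R M := @exist _ _ f (mem_set (KC f Kf)).
have := hw (alpha w chi) (ex_intro2 _ _ chi Kf erefl).
by rewrite /tball /= tnorm0.
Qed.

End Equi.

Section Main.
Variables (R : realType) (A D : topologicalZmodType) (i : D -> A).
Hypothesis Hi : dense_subgroup_embedding i.
Local Notation T := (torus R).

Let iadd : forall x y : D, i (x + y) = i x + i y.
Proof. by case: Hi. Qed.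

Lemma i0 : i 0 = 0.
Proof. by apply: (@addrI _ (i 0)); rewrite -iadd !addr0. Qed.

Lemma isub (x y : D) : i (x - y) = i x - i y.
Proof.
have h : i (- y) = - i y.
  by apply: (@addrI _ (i y)); rewrite -iadd !subrr i0.
by rewrite iadd h.
Qed.

Let icont : continuous i.
Proof. by case: Hi. Qed.

Lemma DN (a : A) (N : set A) : nbhs a N -> exists d, N (i d).
Proof.
case: Hi => _ _ _ _ hd; rewrite nbhsE => -[B [oB Ba] BN].
have [x [Bx [d _ dx]]] := hd B (ex_intro _ a Ba) oB.
by exists d; apply: BN; rewrite dx.
Qed.

Lemma emb0 (W : set D) : nbhs (0 : D) W ->
  exists V : set A, [/\ open V, V 0 & forall d, V (i d) -> W d].
Proof.
case: Hi => _ _ _ he _; rewrite nbhsE => -[B [oB B0] BW].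
have [V oV hV] := he B oB; exists V; split => //.
  have h0 : (i @^-1` V) 0 by rewrite hV.
  by rewrite /= i0 in h0.
by move=> d Vd; apply: BW; rewrite -hV.
Qed.

Lemma CL (f : A -> T) (O : set A) (c : R) : continuous f -> open O ->
  (forall d, O (i d) -> tnorm (f (i d)) <= c) -> forall x, O x -> tnorm (f x) <= c.
Proof.
move=> cf oO h x Ox; apply: small_le => e he.
have n1 : nbhs x (f @^-1` tball (f x) e) by apply: cf; exact: tball_nbhs.
have n2 : nbhs x O by apply: open_nbhs_nbhs.
have [d [h1 h2]] := DN (filterI n1 n2).
have := tnorm_dist (f x) (f (i d)); have := h d h2.
have h3 : tdist (f x) (f (i d)) < e := h1.
lra.
Qed.

Lemma extension (g : D -> T) : is_char g ->
  exists2 f : A -> T, is_char f & (forall d, f (i d) = g d).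
Proof.
move=> [gc gh].
have cauchy : forall e : R, 0 < e -> exists2 N, nbhs (0 : A) N &
    forall a d1 d2, N (i d1 - a) -> N (i d2 - a) -> tdist (g d1) (g d2) < e.
  move=> e he.
  have nW : nbhs (0 : D) (g @^-1` tball (g 0) e) by apply: gc; exact: tball_nbhs.
  have [V [oV V0 hV]] := emb0 nW.
  have [N nN hN] := nbhs0_sub (open_nbhs_nbhs (conj oV V0)).
  exists N => // a d1 d2 h1 h2.
  have : V (i d1 - a - (i d2 - a)) by apply: hN.
  have -> : i d1 - a - (i d2 - a) = i (d1 - d2) by rewrite isub opprB addrA subrK.
  move=> /hV /= h; rewrite (char_dist gh).
  have : tdist (g 0) (g (d1 - d2)) < e := h.
  by rewrite tdistC (char_dist gh) subr0.
have lim : forall a : A, exists c : T, forall e : R, 0 < e ->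
    exists2 N, nbhs (0 : A) N & forall d, N (i d - a) -> tdist (g d) c < e.
  move=> a.
  pose Ha := fun P : set T => exists2 N, nbhs (0 : A) N & forall d, N (i d - a) -> P (g d).
  have HaF : Filter Ha.
    split.
    - by exists setT => //; exact: filterT.
    - move=> P Q [N1 n1 h1] [N2 n2 h2]; exists (N1 `&` N2); first exact: filterI.
      by move=> d [/h1 ? /h2 ?].
    - by move=> P Q PQ [N n h]; exists N => // d /h /PQ.
  have HaP : ProperFilter Ha.
    apply: Build_ProperFilter_ex => // P [N n h].
    have [d hd] := DN (nbhs0_shift a n).
    by exists (g d); apply: h.
  have [c [_ hc]] := torus_compact HaP (@filterT _ _ HaF).
  exists c => e he.
  have [N nN hN] := cauchy (e / 2) ltac:(by rewrite divr_gt0).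
  have HP : Ha [set t | exists2 d, N (i d - a) & t = g d].
    by exists N => // d hd; exists d.
  have [t [[d' hd' ->] ht]] := hc _ _ HP (@tball_nbhs R c (e / 2) ltac:(by rewrite divr_gt0)).
  exists N => // d hd.
  have h1 := hN a d d' hd hd'.
  have h2 : tdist c (g d') < e / 2 := ht.
  rewrite tdistC in h2.
  have := tdist_triangle (g d) (g d') c; lra.
have [f hf] := choice lim.
have e2 : forall e : R, 0 < e -> 0 < e / 2 by move=> e he; rewrite divr_gt0.
have e3 : forall e : R, 0 < e -> 0 < e / 3 by move=> e he; rewrite divr_gt0.
exists f; last first.
  move=> d; symmetry; apply: small_eq => e he.
  have [N nN hN] := hf (i d) e he; apply: hN.
  by rewrite subrr; apply: nbhs_singleton.
split.
  move=> a N /nbhs_tball [e he hN].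
  have [N1 n1 h1] := hf a (e / 2) (e2 e he).
  have := nbhs0_shift a n1; rewrite {1}nbhsE => -[B [oB Ba] BN1].
  suff : nbhs a (f @^-1` N) by [].
  apply: filterS (open_nbhs_nbhs (conj oB Ba)) => x Bx; apply: hN.
  have [N2 n2 h2] := hf x (e / 2) (e2 e he).
  have [d [Bd N2d]] := DN (filterI (open_nbhs_nbhs (conj oB Bx)) (nbhs0_shift x n2)).
  have k1 := h1 d (BN1 _ Bd).
  have k2 := h2 d N2d.
  have k3 := tdist_triangle (f a) (g d) (f x).
  rewrite tdistC in k1.
  suff : tdist (f a) (f x) < e by [].
  lra.
move=> a b; apply: small_eq => e he.
have [N3 n3 h3] := hf (a + b) (e / 3) (e3 e he).
have [N1 n1 h1] := hf a (e / 3) (e3 e he).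
have [N2 n2 h2] := hf b (e / 3) (e3 e he).
have := nbhs0_shift (a + b) n3.
move: (@add_continuous A (a, b)); rewrite /continuous_at /= => hc /hc.
case=> -[P Q] /= [nP nQ] sPQ.
have [d1 [P1 N1d]] := DN (filterI nP (nbhs0_shift a n1)).
have [d2 [Q2 N2d]] := DN (filterI nQ (nbhs0_shift b n2)).
have k3 : N3 (i (d1 + d2) - (a + b)) by rewrite iadd; exact: (sPQ (i d1, i d2)).
have k1 := h1 d1 N1d; have k2 := h2 d2 N2d; have k4 := h3 _ k3.
rewrite gh in k4.
have k5 := tdist_add (g d1) (g d2) (f a) (f b).
have k6 := tdist_triangle (f (a + b)) (tadd (g d1) (g d2)) (tadd (f a) (f b)).
rewrite tdistC in k4; lra.
Qed.

Lemma restr_cont : continuous (@restr R D A i).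
Proof.
move=> f.
have FF : Filter (restr i @ (nbhs f)) by exact: fmap_filter.
apply: (proj2 (@compact_open_cvgP D T (restr i @ (nbhs f)) (restr i f) FF)).
move=> K O cK oO hKO.
have cK' : compact (i @` K).
  by apply: continuous_compact => //; exact: continuous_subspaceT.
have hop := @compact_open_open A T _ _ cK' oO.
have hn : nbhs f [set h : cofun R A | h @` (i @` K) `<=` O].
  apply: open_nbhs_nbhs; split => //.
  by move=> _ [_ [k Kk <-] <-]; apply: hKO; exists k.
rewrite nbhs_simpl /=.
apply: (@filterS _ _ _ _ _ _ hn) => h hh _ [k Kk <-]; apply: hh.
by exists (i k) => //; exists k.
Qed.

Lemma restr_char (f : cofun R A) : chars R A f -> chars R D (restr i f).
Proof.
case=> fc fh; split; first by move=> x; apply: continuous_comp; [exact: icont | exact: fc].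
by move=> x y; rewrite /restr iadd fh.
Qed.

Lemma restr_inj (f g : cofun R A) : chars R A f -> chars R A g ->
  restr i f = restr i g -> f = g.
Proof.
case=> fc _ [gc _] hfg; apply/funext => a; apply: small_eq => e he.
have e2 : 0 < e / 2 by rewrite divr_gt0.
have n1 : nbhs a (f @^-1` tball (f a) (e / 2)) by apply: fc; exact: tball_nbhs.
have n2 : nbhs a (g @^-1` tball (g a) (e / 2)) by apply: gc; exact: tball_nbhs.
have [d [h1 h2]] := DN (filterI n1 n2).
have k : f (i d) = g (i d) by have := congr1 (fun h => h d) hfg.
have k1 : tdist (f a) (f (i d)) < e / 2 := h1.
have k2 : tdist (g a) (g (i d)) < e / 2 := h2.
rewrite k in k1; rewrite tdistC in k2.
have := tdist_triangle (f a) (g (i d)) (g a); lra.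
Qed.

Lemma restr_surj (g : cofun R D) : chars R D g ->
  exists2 f : cofun R A, chars R A f & restr i f = g.
Proof.
move=> /extension [f hf hfg]; exists f => //.
by apply/funext => d; exact: hfg.
Qed.

Lemma TR (E : set (cofun R A)) : E `<=` chars R A ->
  equi (restr i @` E) -> equi E.
Proof.
move=> EC he e e0.
have e2 : 0 < e / 2 by rewrite divr_gt0.
have [W nW hW] := he _ e2.
have [V [oV V0 hV]] := emb0 nW.
exists V; first exact: open_nbhs_nbhs.
move=> f Ef w Vw; have [fc _] := EC f Ef.
have : tnorm (f w) <= e / 2.
  apply: (CL fc oV) => // d /hV Wd; apply/ltW.
  exact: (hW (restr i f) (ex_intro2 _ _ f Ef erefl) d Wd).
lra.
Qed.

Lemma b2 (ca : continuous (@alpha R D)) (S : set (cofun R A)) :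
  S `<=` chars R A -> compact (restr i @` S) -> compact S.
Proof.
move=> SC cS.
have SC' : restr i @` S `<=` chars R D.
  by move=> _ [f Sf <-]; exact: restr_char (SC f Sf).
have eqS : equi S := TR SC (EQD ca SC' cS).
rewrite compact_ultra => F UF FS.
have PF : ProperFilter (restr i @ F) by exact: fmap_proper_filter.
have FS' : F (restr i @^-1` (restr i @` S)).
  by apply: (filterS (P := S)) => // f Sf /=; exists f.
have [g [[f0 Sf0 g0] clg]] := cS _ PF FS'.
exists f0; split => //.
apply: (proj2 (@compact_open_cvgP A T F f0 _)) => K O cK oO hKO.
move: cK; rewrite compact_near_coveringP -near_covering_withinP => cov.
have FF : Filter F by exact: ultra_proper.
have := cov (cofun R A) F (fun f x => O (f x)) FF.
move=> h; suff: \forall f \near F, K `<=` (fun x => O (f x)).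
  by apply: filterS => f hf _ [x Kx <-]; exact: hf.
apply: h => x Kx.
have : nbhs (f0 x) O by apply: open_nbhs_nbhs; split => //; apply: hKO; exists x.
move=> /nbhs_tball [dl hdl hO].
have d3 : 0 < dl / 3 by rewrite divr_gt0.
have [W nW hW] := eqS _ d3.
have [N0 nN0 hN0] := nbhs0_sub nW.
have nN1 : nbhs (0 : A) (N0 `&` W) by exact: filterI.
have [d [hd1 hd2]] := DN (nbhs0_shift x nN1).
have hF : F [set f | S f /\ tdist (f0 (i d)) (f (i d)) < dl / 3].
  apply: filterI => //.
  have nb : nbhs (restr i f0) [set h : cofun R D | h @` [set d] `<=` tball (restr i f0 d) (dl / 3)].
    apply: open_nbhs_nbhs; split.
      apply: compact_open_open; [exact: compact_set1 | exact: open_tball].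
    by move=> _ [_ -> <-]; rewrite /tball /= tdistxx.
  rewrite g0 in nb.
  apply: (filterS _ (ULT_cluster UF clg nb)) => f /= hf.
  rewrite -g0 in hf.
  exact: (hf (f (i d)) (ex_intro2 _ _ d erefl erefl)).
exists ([set x' | (N0 `&` W) (x' - x)], [set f | S f /\ tdist (f0 (i d)) (f (i d)) < dl / 3]).
  by split => //=; exact: (nbhs0_shift x nN1).
case=> x' f /= [[hx1 hx2] [Sf hfd]] Kx'.
apply: hO; rewrite /tball /=.
have k1 : tdist (f0 x) (f0 (i d)) < dl / 3.
  rewrite tdistC (char_dist (SC f0 Sf0).2); exact: hW f0 Sf0 _ hd2.
have k3 : tdist (f (i d)) (f x') < dl / 3.
  rewrite tdistC (char_dist (SC f Sf).2); apply: (hW f Sf).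
  have -> : x' - i d = (x' - x) - (i d - x) by rewrite opprB addrA subrK.
  exact: hN0.
have k4 := tdist_triangle (f0 x) (f0 (i d)) (f (i d)).
have k5 := tdist_triangle (f0 x) (f (i d)) (f x').
lra.
Qed.

Lemma b3 (ca : continuous (@alpha R D)) : continuous (@alpha R A).
Proof.
move=> a.
have FF : Filter (@alpha R A @ nbhs a) by exact: fmap_filter.
apply: (proj2 (@compact_open_cvgP (dual R A) T _ (alpha a) FF)) => K O cK oO hKO.
have svc : continuous (@set_val _ (chars R A) : dual R A -> cofun R A).
  exact: initial_continuous.
pose E := @set_val _ (chars R A) @` K.
have EC : E `<=` chars R A by move=> _ [chi _ <-]; exact: set_valP chi.
have cE : compact E by apply: continuous_compact => //; exact: continuous_subspaceT.
have cE' : compact (restr i @` E).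
  by apply: continuous_compact => //; apply: continuous_subspaceT; exact: restr_cont.
have EC' : restr i @` E `<=` chars R D by move=> _ [f Ef <-]; exact: restr_char (EC f Ef).
have eqE : equi E := TR EC (EQD ca EC' cE').
move: cK; rewrite compact_near_coveringP -near_covering_withinP => cov.
have := cov A (nbhs a) (fun a' (chi : dual R A) => O (set_val chi a')) _.
move=> h; suff: \forall a' \near a, K `<=` (fun chi : dual R A => O (set_val chi a')).
  by apply: filterS => a' ha' _ [chi Kchi <-]; exact: ha'.
apply: h => chi Kchi.
have : nbhs (set_val chi a) O.
  by apply: open_nbhs_nbhs; split => //; apply: hKO; exists chi.
move=> /nbhs_tball [dl hdl hO].
have d2 : 0 < dl / 2 by rewrite divr_gt0.
have [W nW hW] := eqE _ d2.
exists ([set psi : dual R A | tdist (set_val psi a) (set_val chi a) < dl / 2],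
        [set a' | W (a' - a)]).
  split => /=; last exact: (nbhs0_shift a nW).
  have nB : nbhs (set_val chi) [set h : cofun R A | h @` [set a] `<=` tball (set_val chi a) (dl / 2)].
    apply: open_nbhs_nbhs; split.
      apply: compact_open_open; [exact: compact_set1 | exact: open_tball].
    by move=> _ [_ -> <-]; rewrite /tball /= tdistxx.
  have := svc chi _ nB; rewrite nbhs_simpl /=.
  apply: filterS => psi /= hpsi.
  rewrite tdistC; exact: (hpsi (set_val psi a) (ex_intro2 _ _ a erefl erefl)).
case=> psi a' /= [h1 h2] Kpsi.
apply: hO; rewrite /tball /=.
have Epsi : E (set_val psi) by exists psi.
have k2 : tdist (set_val psi a) (set_val psi a') < dl / 2.
  rewrite tdistC (char_dist (EC _ Epsi).2); exact: (hW _ Epsi).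
rewrite tdistC in h1.
have := tdist_triangle (set_val chi a) (set_val psi a) (set_val psi a'); lra.
Qed.

Lemma c_part : locally_quasi_convex R D -> locally_quasi_convex R A.
Proof.
move=> [_ hD]; split.
  move=> U nU; apply: filterS nU => u Uu chi [_ hchi]; apply: hchi; by exists u.
move=> V nV.
have [V1 nV1 hV1] := nbhs0_add nV.
have nW : nbhs (0 : D) (i @^-1` V1).
  have h : nbhs (i 0) V1 by rewrite i0.
  exact: icont h.
have [UD nUD hUD] := hD _ nW.
have [Op [oO O0 hO]] := emb0 nUD.
have [UA nUA hUA] := nbhs0_add (open_nbhs_nbhs (conj oO O0)).
have UAO : forall x, UA x -> Op x.
  by move=> x hx; have := hUA x 0 hx (nbhs_singleton nUA); rewrite addr0.
exists UA => // a ha.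
have [d [hd1 hd2]] := DN (nbhs0_shift a (filterI nUA (nbhs0_opp nV1))).
have dP : @prepolar R D (@polar R D UD) d.
  move=> psi [psic hpsi].
  have [f [fc fh] hfd] := extension psic.
  have fO : forall x, Op x -> tnorm (f x) <= 4^-1.
    apply: (CL fc oO) => d' Od'; rewrite hfd; apply/Lambda1P.
    by apply: hpsi; exists d' => //; exact: hO.
  have polf : polar UA (f : cofun R A).
    split; first by split.
    by move=> _ [x UAx <-]; apply/Lambda1P; exact: fO (UAO _ UAx).
  pose f2 : cofun R A := fun x => f (x + x).
  have dbl : continuous (fun x : A => x + x).
    move=> x; apply: (@continuous_comp _ _ _ (fun x => (x, x)) (fun x : A * A => x.1 + x.2)).
      by apply: cvg_pair; exact: cvg_id.
    exact: add_continuous.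
  have polf2 : polar UA f2.
    split.
      split; first by move=> x; apply: continuous_comp; [exact: dbl | exact: fc].
      by move=> x y; rewrite /f2 -fh addrACA.
    move=> _ [x UAx <-]; apply/Lambda1P; exact: fO (hUA x x UAx UAx).
  have ka : tnorm (f a) <= 8^-1.
    apply: tnorm_half; first by apply/Lambda1P; exact: ha f polf.
    rewrite -fh; apply/Lambda1P; exact: ha f2 polf2.
  have ky : tnorm (f (i d - a)) <= 8^-1.
    apply: tnorm_half; first exact: fO (UAO _ hd1).
    by rewrite -fh; exact: fO (hUA _ _ hd1 hd1).
  rewrite -hfd; apply/Lambda1P.
  have -> : i d = a + (i d - a) by rewrite addrC subrK.
  rewrite fh; apply: le_trans (tnorm_add _ _) _; lra.
have Vid : V1 (i d) by exact: hUD.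
have -> : a = (a - i d) + i d by rewrite subrK.
apply: hV1 => //; by rewrite -opprB.
Qed.

End Main.

Local Close Scope quotient_scope.

Theorem mainTheorem5 (R : realType) (A D : topologicalZmodType) (i : D -> A)
  (Hi : dense_subgroup_embedding i) :
  (* (a) restriction is a bijective continuous homomorphism \hat A -> \hat D *)
  [/\ (forall f : cofun R A, chars R A f -> chars R D (restr i f)),
      (forall f g : cofun R A, chars R A f -> chars R A g ->
         restr i (chadd f g) = chadd (restr i f) (restr i g)),
      (forall f g : cofun R A, chars R A f -> chars R A g ->
         restr i f = restr i g -> f = g),
      (forall g : cofun R D, chars R D g ->
         exists2 f : cofun R A, chars R A f & restr i f = g)
    & {within chars R A, continuous (@restr R D A i)}] /\
  (* (b) *)
  (continuous (@alpha R D) ->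
     (forall S : set (cofun R A), S `<=` chars R A ->
        (compact S <-> compact (restr i @` S))) /\
     continuous (@alpha R A)) /\
  (* (c) *)
  (locally_quasi_convex R D -> locally_quasi_convex R A).
Proof.
split.
  split.
  - by move=> f; exact: (restr_char Hi).
  - by [].
  - by move=> f g hf hg; exact: (restr_inj Hi).
  - by move=> g; exact: (restr_surj Hi).
  - by apply: continuous_subspaceT; exact: (restr_cont Hi).
split.
  move=> ca; split; last exact: (b3 Hi ca).
  move=> S SC; split.
    move=> cS; apply: continuous_compact => //.
    by apply: continuous_subspaceT; exact: (restr_cont Hi).
  exact: (b2 Hi ca SC).
exact: (c_part Hi).
Qed.
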